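(* Let $(T,E)$ be the $3$-regular tree, let $x\in T$, and let $y$ be a neighbor of $x$. For every integer $t\ge 0$, the Fibonacci vectors $s_t(x)$ and $r_t(x,y)$ have non-negative coordinates, and $$s_t(x)_- = f_{2t},\quad s_t(x)_+ = f_{2t+2},\quad r_t(x,y)_- = f_{2t-1},\quad r_t(x,y)_+ = f_{2t+1}.$$
   Context: $(f_i)_{i\in\mathbb Z}$ denotes the Fibonacci numbers with $f_0=0$, $f_1=1$ and $f_{i+1}=f_i+f_{i-1}$ for all $i\in\mathbb Z$ (so $f_{-1}=1$). $(T,E)$ is the $3$-regular tree (every vertex has exactly three neighbors); $d(x,z)$ is the graph distance. $K_0(T)$ is the free abelian group with basis $\{s(x): x\in T\}$; an element is written $a=\sum_x a_x s(x)$ with finitely many nonzero $a_x\in\mathbb Z$. For $y\in T$ the reflection $\sigma^y:K_0(T)\to K_0(T)$ is given by $(\sigma^y a)_z=a_z$ for $z\neq y$ and $(\sigma^y a)_y=-a_y+\sum_{\{z,y\}\in E}a_z$. For $x\in T$, $\Sigma^x$ denotes the composition of all $\sigma^y$ with $d(x,y)$ even, and $\underline\Sigma^x$ the composition of all $\sigma^y$ with $d(x,y)$ odd (these reflections pairwise commute, so the compositions are well defined on $K_0(T)$). Define $s_0(x)=s(x)$ and $s_{t+1}(x)=\underline\Sigma^x s_t(x)$ if $t$ is even, $s_{t+1}(x)=\Sigma^x s_t(x)$ if $t$ is odd. For neighbors $x,y$ define $r_0(x,y)=s(x)+s(y)$ and $r_{t+1}(x,y)=\underline\Sigma^x r_t(x,y)$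 if $t$ is even, $r_{t+1}(x,y)=\Sigma^x r_t(x,y)$ if $t$ is odd. For such a vector $a$ (equal to $s_t(x)$ or $r_t(x,y)$) put $a_-=\sum_{z:\,d(x,z)\not\equiv t \pmod 2} a_z$ and $a_+=\sum_{z:\,d(x,z)\equiv t\pmod 2} a_z$. *)

(* Defs.v *)
From HB Require Import structures.
From mathcomp Require Import all_boot all_order all_algebra.
Set Implicit Arguments. Unset Strict Implicit. Unset Printing Implicit Defensive.
Import Order.TTheory GRing.Theory Num.Theory.
Local Open Scope ring_scope.

(* ---------- The 3-regular tree ----------
   Model: the Cayley graph of Z/2 * Z/2 * Z/2, i.e. reduced words over the
   alphabet 'I_3 (no two consecutive letters equal); w is adjacent to
   w ++ [a] (for a <> last letter of w) and to w with its last letter removed. *)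
Definition word := seq 'I_3.
Definition reduced (w : word) : bool := sorted (fun a b : 'I_3 => a != b) w.
Definition T := {w : word | reduced w}.

Definition letters : seq 'I_3 :=
  [:: Ordinal (erefl true : (0 < 3)%N); Ordinal (erefl true : (1 < 3)%N); Ordinal (erefl true : (2 < 3)%N)].

Definition nbrs_raw (w : word) : seq word :=
  (if w is [::] then [::] else [:: take (size w).-1 w]) ++
  [seq rcons w a | a <- letters & (w == [::]) || (a != last a w)].

Definition mkT (w : word) : option T :=
  (if reduced w as b return reduced w = b -> option T
   then fun h => Some (exist _ w h) else fun _ => None) erefl.

(* neighbours of a vertex (all raw neighbours of a reduced word are reduced) *)
Definition nbrs (u : T) : seq T := pmap mkT (nbrs_raw (val u)).

Definition adj (u v : T) : bool := v \in nbrs u.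

Fixpoint walkb (n : nat) (u v : T) : bool :=
  if n is n'.+1 then has (fun w => walkb n' w v) (nbrs u) else u == v.

(* graph distance: least n admitting a walk of length n (the search bound
   |u| + |v| always suffices, since one can walk through the root) *)
Definition dist (u v : T) : nat :=
  find (fun n => walkb n u v) (iota 0 (size (val u) + size (val v)).+1).

Definition vec := T -> int.

Definition sbase (x : T) : vec := fun z => ((z == x) : nat)%:Z.

Definition refl (y : T) (a : vec) : vec :=
  fun z => if z == y then - a y + \sum_(w <- nbrs y) a w else a z.

(* Sigma^x : composition of all sigma^y with d(x,y) even;
   underline Sigma^x : composition of all sigma^y with d(x,y) odd.
   These reflections pairwise commute and each only changes its own
   coordinate reading neighbouring coordinates (of the other parity), so the
   composition acts coordinatewise as follows. *)
Definition SigmaPar (x : T) (par : bool) (a : vec) : vec :=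
  fun z => if odd (dist x z) == par then - a z + \sum_(w <- nbrs z) a w else a z.
Definition Sigma (x : T) := SigmaPar x false.
Definition uSigma (x : T) := SigmaPar x true.

Fixpoint svec (x : T) (t : nat) : vec :=
  if t is t'.+1 then (if odd t' then Sigma x else uSigma x) (svec x t')
  else sbase x.

Fixpoint rvec (x y : T) (t : nat) : vec :=
  if t is t'.+1 then (if odd t' then Sigma x else uSigma x) (rvec x y t')
  else (fun z => sbase x z + sbase y z).

Definition covers (a : vec) (S : seq T) : Prop :=
  uniq S /\ forall z, a z != 0 -> z \in S.

Definition sum_minus (x : T) (t : nat) (a : vec) (S : seq T) : int :=
  \sum_(z <- S | odd (dist x z) != odd t) a z.
Definition sum_plus (x : T) (t : nat) (a : vec) (S : seq T) : int :=
  \sum_(z <- S | odd (dist x z) == odd t) a z.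

Fixpoint fibn (n : nat) : nat :=
  match n with 0 => 0 | 1 => 1 | (m.+1 as k).+1 => fibn k + fibn m end.

(* f_{-m} = (-1)^(m+1) f_m ; Negz n = -(n+1) *)
Definition fib (i : int) : int :=
  match i with
  | Posz n => (fibn n)%:Z
  | Negz n => (-1) ^+ n * (fibn n.+1)%:Z
  end.

(* Main.v *)
Require Import Defs.
From HB Require Import structures.
From mathcomp Require Import all_boot all_order all_algebra.
From mathcomp Require Import zify.
Import Order.TTheory GRing.Theory Num.Theory.
Set Implicit Arguments. Unset Strict Implicit. Unset Printing Implicit Defensive.

Lemma mkT_gen w (b : bool) (e : reduced w = b) :
  (forall z, (if b as b0 return reduced w = b0 -> option T
   then fun h => Some (exist _ w h) else fun _ => None) e = Some z -> val z = w).
Proof. by case: b e => e z //= [<-]. Qed.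
Lemma mkT_some w z : mkT w = Some z -> val z = w.
Proof. exact: mkT_gen. Qed.
Lemma mkT_val (z : T) : mkT (val z) = Some z.
Proof.
case: z => w h; rewrite /mkT /=.
have : forall b (e : reduced w = b), b = true -> (if b as b0 return reduced w = b0 -> option T
   then fun h => Some (exist _ w h) else fun _ => None) e = Some (exist _ w h).
  by move=> b e; case: b e => //= e _; congr Some; apply: val_inj.
by apply.
Qed.

Lemma mkT_oc : ocancel mkT val.
Proof. move=> w; case E: (mkT w) => [z|] //=; exact: mkT_some. Qed.

Lemma mem_nbrs u v : (v \in nbrs u) = (val v \in nbrs_raw (val u)).
Proof. exact: (can2_mem_pmap mkT_oc mkT_val). Qed.

Lemma mem_letters (a : 'I_3) : a \in letters.
Proof. by case: a => [[|[|[|m]]] h]. Qed.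

Lemma reduced_rcons w a : reduced (rcons w a) = reduced w && ((w == [::]) || (last a w != a)).
Proof. by case: w => //= h w; rewrite rcons_path. Qed.

Definition par (w : word) := take (size w).-1 w.

Lemma par_rcons w a : par (rcons w a) = w.
Proof. by rewrite /par size_rcons /= -cats1 take_size_cat. Qed.

Lemma mem_raw w w' (hw' : reduced w') : (w' \in nbrs_raw w) =
  ((w != [::]) && (w' == par w)) || ((w' != [::]) && (w == par w')).
Proof.
rewrite /nbrs_raw mem_cat; congr orb.
  by case: w => [|h w] //=; rewrite inE.
apply/mapP/idP.
  move=> [a _ ->]; rewrite par_rcons eqxx andbT; by case: w.
case/andP; case/lastP: w' hw' => // v a hr _ /eqP; rewrite par_rcons => ->.
exists a => //; rewrite mem_filter mem_letters andbT.
move: hr; rewrite reduced_rcons => /andP[_ /orP[->|h]] //; by rewrite eq_sym in h; rewrite h orbT.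
Qed.

Lemma adjE u v : (v \in nbrs u) =
  ((val u != [::]) && (val v == par (val u))) || ((val v != [::]) && (val u == par (val v))).
Proof. by rewrite mem_nbrs mem_raw //; case: v. Qed.

Lemma adj_sym u v : (v \in nbrs u) = (u \in nbrs v).
Proof. by rewrite !adjE orbC. Qed.

Lemma size_par w : w != [::] -> size w = (size (par w)).+1.
Proof. by case/lastP: w => // v a _; rewrite par_rcons size_rcons. Qed.

Lemma adj_size u v : v \in nbrs u ->
  (size (val u) = (size (val v)).+1) \/ (size (val v) = (size (val u)).+1).
Proof.
rewrite adjE => /orP[/andP[h /eqP ->]|/andP[h /eqP ->]]; [left|right]; exact: size_par.
Qed.

Lemma adj_odd u v : v \in nbrs u -> odd (size (val v)) = ~~ odd (size (val u)).
Proof. move=> h; case: (adj_size h) => ->; by rewrite /= ?negbK. Qed.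

Lemma adj_le u v : v \in nbrs u -> (size (val v) <= (size (val u)).+1)%N.
Proof. move=> h; case: (adj_size h) => -> //; exact: leqW. Qed.

Lemma reduced_par w : reduced w -> reduced (par w).
Proof. exact: take_sorted. Qed.

Lemma raw_reduced w w' : reduced w -> w' \in nbrs_raw w -> reduced w'.
Proof.
move=> hw; rewrite /nbrs_raw mem_cat => /orP[|/mapP[a]].
  by case: w hw => //= h w hw; rewrite inE => /eqP ->; exact: take_sorted.
rewrite mem_filter => /andP[ha _] ->; rewrite reduced_rcons hw /=.
case: (w =P [::]) ha => //= _ ha; by rewrite eq_sym.
Qed.

Lemma uniq_raw w : uniq (nbrs_raw w).
Proof.
rewrite /nbrs_raw cat_uniq map_inj_uniq ?filter_uniq ?andbT //; last exact: rcons_injr.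
case: w => // h w; rewrite ?andbT; apply/hasP => [[z /mapP[a _ ->]]].
rewrite inE => /eqP /(congr1 size); rewrite size_rcons size_take /=.
rewrite ltnSn; lia.
Qed.

Lemma uniq_nbrs u : uniq (nbrs u).
Proof. exact: (pmap_uniq mkT_oc (uniq_raw _)). Qed.

Lemma size_raw w : size (nbrs_raw w) = 3%N.
Proof.
case/lastP: w => [|v l] //=.
rewrite /nbrs_raw size_cat size_map size_filter.
have -> : (rcons v l == [::]) = false by case: v.
case: v => [|h v]; rewrite /= ?last_rcons;
by case: l => [[|[|[|m]]] hl].
Qed.

Lemma size_nbrs u : size (nbrs u) = 3%N.
Proof.
rewrite /nbrs size_pmap -(size_raw (val u)) -[RHS]count_predT.
apply: eq_in_count => w /(raw_reduced (valP u)) hw /=.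
by rewrite (_ : w = val (exist _ w hw : T)) // mkT_val.
Qed.

Definition root : T := exist _ [::] isT.

Lemma walk_par n u v : walkb n u v -> odd n = odd (size (val u) + size (val v)).
Proof.
elim: n u => [|n IH] u /=.
  by move/eqP->; rewrite addnn odd_double.
move/hasP=> [w hw /IH ->]; by rewrite !oddD (adj_odd hw) addNb negbK.
Qed.

Lemma walk_cat m n u w v : walkb m u w -> walkb n w v -> walkb (m + n) u v.
Proof.
elim: m u => [|m IH] u /=; first by move/eqP->.
move/hasP=> [w' h1 h2] h3; apply/hasP; exists w' => //; exact: IH.
Qed.

Definition parT (u : T) : T := exist _ (par (val u)) (reduced_par (valP u)).

Lemma parT_nbr u : val u != [::] -> parT u \in nbrs u.
Proof. by move=> h; rewrite adjE h eqxx. Qed.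

Lemma walk_up k u : size (val u) = k -> walkb k u root.
Proof.
elim: k u => [|k IH] u hs /=.
  by apply/eqP/val_inj; move: hs; case: (val u).
have hu : val u != [::] by case: (val u) hs.
apply/hasP; exists (parT u); first exact: parT_nbr.
apply: IH; move: hs; rewrite (size_par hu) /=; by case.
Qed.

Lemma walk_down k v : size (val v) = k -> walkb k root v.
Proof.
elim: k v => [|k IH] v hs.
  by apply/eqP/val_inj; move: hs; case: (val v).
have hv : val v != [::] by case: (val v) hs.
rewrite -addn1; apply: (walk_cat (w := parT v)).
  apply: IH; move: hs; rewrite (size_par hv) /=; by case.
rewrite /=; apply/hasP; exists v; last exact: eqxx.
by rewrite adj_sym parT_nbr.
Qed.

Lemma walkb_dist u v : walkb (dist u v) u v.
Proof.
rewrite /dist; set s := iota _ _.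
have hh : has (fun n => walkb n u v) s.
  apply/hasP; exists (size (val u) + size (val v))%N.
    by rewrite mem_iota add0n ltnSn.
  exact: walk_cat (walk_up erefl) (walk_down erefl).
have := nth_find 0%N hh; rewrite nth_iota //; by rewrite -(size_iota 0 (size (val u) + size (val v)).+1) -has_find.
Qed.

Lemma odd_dist u v : odd (dist u v) = odd (size (val u)) (+) odd (size (val v)).
Proof. by rewrite (walk_par (walkb_dist u v)) oddD. Qed.

Lemma odd_dist_adj x z w : w \in nbrs z -> odd (dist x w) = ~~ odd (dist x z).
Proof. by move=> h; rewrite !odd_dist (adj_odd h) addbN. Qed.

Lemma odd_dist0 x : odd (dist x x) = false.
Proof. by rewrite odd_dist addbb. Qed.

Local Open Scope ring_scope.

Lemma sum_swap (S L : seq T) (F : T -> int) : uniq S -> uniq L ->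
  \sum_(w <- S | w \in L) F w = \sum_(w <- L | w \in S) F w.
Proof.
move=> uS uL. rewrite -big_filter. rewrite -[RHS]big_filter. 
apply: (perm_big _ (uniq_perm (filter_uniq _ uS) (filter_uniq _ uL) _)).
by move=> z; rewrite !mem_filter andbC.
Qed.

Lemma sum_restr (S L : seq T) (F : T -> int) :
  (forall w, w \in L -> F w != 0 -> w \in S) ->
  \sum_(w <- L | w \in S) F w = \sum_(w <- L) F w.
Proof.
move=> h; rewrite big_mkcond; apply: eq_big_seq => w hw; case: ifP => // hS.
by case: (eqVneq (F w) 0) => // /(h w hw); rewrite hS.
Qed.

Lemma cover_indep (a : vec) S1 S2 (P : pred T) : covers a S1 -> covers a S2 ->
  \sum_(z <- S1 | P z) a z = \sum_(z <- S2 | P z) a z.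
Proof.
move=> [u1 h1] [u2 h2].
pose F z := if P z then a z else 0.
have hF : forall z, F z != 0 -> a z != 0 by move=> z; rewrite /F; case: (P z) => //; rewrite eqxx.
rewrite (big_mkcond P) [RHS](big_mkcond P) -/F.
rewrite -(@sum_restr S2 S1); last by move=> w _ /hF /h2.
rewrite sum_swap // sum_restr //; by move=> w _ /hF /h1.
Qed.

Lemma sum_sub (L S : seq T) (F : T -> int) : uniq L -> uniq S -> {subset S <= L} ->
  (forall w, 0 <= F w) -> \sum_(w <- S) F w <= \sum_(w <- L) F w.
Proof.
move=> uL uS sub h.
rewrite -(@sum_restr L S); last by move=> w /sub.
rewrite sum_swap // [X in _ <= X]big_mkcond [X in X <= _]big_mkcond.
apply: ler_sum => i _; case: ifP => // _.
Qed.

Lemma one_le (L : seq T) (F : T -> int) z : uniq L -> z \in L ->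
  (forall w, 0 <= F w) -> F z <= \sum_(w <- L) F w.
Proof.
move=> uL hz h; have := @sum_sub L [:: z] F uL isT _ h.
rewrite big_seq1; apply; by move=> w; rewrite inE => /eqP ->.
Qed.

Lemma two_le (L : seq T) (F : T -> int) z o : uniq L -> z \in L -> o \in L -> o != z ->
  (forall w, 0 <= F w) -> F z + F o <= \sum_(w <- L) F w.
Proof.
move=> uL hz ho hoz h.
have uS : uniq [:: z; o] by rewrite /= inE eq_sym hoz.
have := @sum_sub L _ F uL uS _ h; rewrite big_cons big_seq1; apply.
by move=> w; rewrite !inE => /orP[]/eqP->.
Qed.

Lemma other3 (L : seq T) a b : uniq L -> size L = 3%N ->
  exists2 o, o \in L & (o != a) && (o != b).
Proof.
case: L => [|o1 [|o2 [|o3 []]]] // hu _.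
have [n12 n13 n23] : [/\ o1 != o2, o1 != o3 & o2 != o3].
  by move: hu; rewrite /= !inE !negb_or => /andP[/andP[-> ->] /andP[-> _]].
have [h1|h1] := boolP ((o1 != a) && (o1 != b)).
  by exists o1 => //; rewrite inE eqxx.
have [h2|h2] := boolP ((o2 != a) && (o2 != b)).
  by exists o2 => //; rewrite !inE eqxx orbT.
exists o3; first by rewrite !inE eqxx !orbT.
move: h1 h2; rewrite !negb_and !negbK.
case/orP=> /eqP e1; case/orP=> /eqP e2; subst.
- by rewrite eqxx in n12.
- by rewrite eq_sym n13 eq_sym n23.
- by rewrite eq_sym n23 eq_sym n13.
- by rewrite eqxx in n12.
Qed.

Fixpoint wl (k : nat) : seq word :=
  if k is k'.+1 then [seq a :: w | a <- letters, w <- wl k'] else [:: [::]].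
Lemma mem_wl w : w \in wl (size w).
Proof. elim: w => [|a w IH] //=; exact: (allpairs_f _ (mem_letters a) IH). Qed.
Fixpoint aw (n : nat) : seq word := if n is n'.+1 then aw n' ++ wl n else wl 0.
Lemma mem_aw w n : (size w <= n)%N -> w \in aw n.
Proof.
elim: n => [|n IH].
  by case: w.
have -> : aw n.+1 = aw n ++ wl n.+1 by [].
rewrite leq_eqVlt => /orP[/eqP e|h]; rewrite mem_cat.
  by rewrite -e mem_wl orbT.
by rewrite IH.
Qed.
Definition ball n : seq T := undup (pmap mkT (aw n)).
Lemma mem_ball z n : (size (val z) <= n)%N -> z \in ball n.
Proof. by move=> h; rewrite mem_undup (can2_mem_pmap mkT_oc mkT_val) mem_aw. Qed.
Lemma uniq_ball n : uniq (ball n).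
Proof. exact: undup_uniq. Qed.

Definition supp (a : vec) n := forall z, a z != 0 -> (size (val z) <= n)%N.
Lemma cover_ball a n m : supp a n -> (n <= m)%N -> covers a (ball m).
Proof.
move=> h hm; split; first exact: uniq_ball.
by move=> z /h hz; apply: mem_ball; exact: leq_trans hm.
Qed.

Definition nb (a : vec) z := \sum_(w <- nbrs z) a w.

Lemma step_supp x c a n : supp a n -> supp (SigmaPar x c a) n.+1.
Proof.
move=> h z; rewrite /SigmaPar; case: ifP => _; last by move/h/leqW.
case: (eqVneq (a z) 0) => [az|/h/leqW //].
rewrite az oppr0 add0r => hs; rewrite leqNgt; apply/negP => hz.
move: hs; rewrite big1_seq ?eqxx // => w /andP[_ hw]; apply/eqP.
apply: contraTT hz => /h hwn; rewrite -leqNgt.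
rewrite adj_sym in hw; apply: leq_trans (adj_le hw) _; by rewrite ltnS.
Qed.

Lemma nb_ball a n z : supp a n -> nb a z = \sum_(w <- ball n.+1 | w \in nbrs z) a w.
Proof.
move=> h; rewrite (sum_swap _ (uniq_ball _) (uniq_nbrs z)) sum_restr //.
by move=> w _ /h hw; apply: mem_ball; exact: leqW.
Qed.

Lemma mul3 (v : int) : v *+ 3 = v + v + v.
Proof. by rewrite !mulrS mulr0n addr0 addrA. Qed.

Lemma key x c a n : supp a n ->
  \sum_(z <- ball n.+1 | odd (dist x z) == c) nb a z =
  (\sum_(w <- ball n.+1 | odd (dist x w) != c) a w) *+ 3.
Proof.
move=> h; set S := ball n.+1.
transitivity (\sum_(z <- S | odd (dist x z) == c) \sum_(w <- S) (if w \in nbrs z then a w else 0)).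
  by apply: eq_bigr => z _; rewrite (nb_ball _ h) big_mkcond.
rewrite exchange_big /= -sumrMnl [RHS]big_mkcond /=.
apply: eq_bigr => w _.
case: ifP => hw.
  case: (eqVneq (a w) 0) => [aw0|awn].
    by rewrite aw0 mul0rn; apply: big1 => z _; case: ifP.
  rewrite -big_mkcondr /=.
  rewrite (eq_bigl (fun z => z \in nbrs w)); last first.
    move=> z /=; rewrite adj_sym; case: (boolP (z \in nbrs w)) => hz; last by rewrite andbF.
    by rewrite andbT (odd_dist_adj x hz); move: hw; case: (odd (dist x w)); case: c.
  rewrite (sum_swap _ (uniq_ball _) (uniq_nbrs w)) sum_restr; last first.
    move=> z hz _; apply: mem_ball; apply: leq_trans (adj_le hz) _.
    by rewrite ltnS; exact: (h w awn).
  by rewrite big_const_seq count_predT size_nbrs /= mul3 addr0 addrA.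
apply: big1 => z hz; case: ifP => // hwz; exfalso.
move: hw hz; rewrite (odd_dist_adj x hwz); case: (odd (dist x z)); case: c => //.
Qed.

Lemma step_sum x c a n : supp a n ->
  (\sum_(z <- ball n.+1 | odd (dist x z) != c) SigmaPar x c a z =
     \sum_(z <- ball n.+1 | odd (dist x z) != c) a z) /\
  (\sum_(z <- ball n.+1 | odd (dist x z) == c) SigmaPar x c a z =
     (\sum_(z <- ball n.+1 | odd (dist x z) != c) a z) *+ 3 -
     \sum_(z <- ball n.+1 | odd (dist x z) == c) a z).
Proof.
move=> h; split.
  by apply: eq_bigr => z /negbTE hz; rewrite /SigmaPar hz.
rewrite (eq_bigr (fun z => - a z + nb a z)); last by move=> z hz; rewrite /SigmaPar hz.
by rewrite big_split /= sumrN (key _ _ h) addrC.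
Qed.

Lemma predNN (b c : bool) : (b != ~~ c) = (b == c).
Proof. by case: b; case: c. Qed.
Lemma predNE (b c : bool) : (b == ~~ c) = (b != c).
Proof. by case: b; case: c. Qed.

Lemma seq_sums x (a : nat -> vec) n0 :
  (forall t, a t.+1 = SigmaPar x (~~ odd t) (a t)) -> supp (a 0%N) n0 ->
  forall t, supp (a t) (n0 + t) /\
  sum_minus x t.+1 (a t.+1) (ball (n0 + t.+1)) = sum_plus x t (a t) (ball (n0 + t)) /\
  sum_plus x t.+1 (a t.+1) (ball (n0 + t.+1)) =
    sum_plus x t (a t) (ball (n0 + t)) *+ 3 - sum_minus x t (a t) (ball (n0 + t)).
Proof.
move=> ha h0.
have hs : forall t, supp (a t) (n0 + t).
  elim=> [|t IH]; first by rewrite addn0.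
  by rewrite ha addnS; apply: step_supp.
move=> t; split; first exact: hs.
have [e1 e2] := step_sum x (~~ odd t) (hs t).
have sw : forall P : pred T, \sum_(z <- ball (n0 + t) | P z) a t z = \sum_(z <- ball (n0 + t).+1 | P z) a t z.
  by move=> P; apply: cover_indep; apply: (cover_ball (hs t)).
rewrite /sum_minus /sum_plus !sw addnS ha [odd t.+1]/= e1 e2.
by rewrite !(eq_bigl _ _ (fun z => predNN _ _)) !(eq_bigl _ _ (fun z => predNE _ _)).
Qed.

Lemma bN1 (b c : bool) : b == ~~ c -> (b == c) = false.
Proof. by case: b; case: c. Qed.
Lemma bN2 (b c : bool) : b == ~~ c -> ~~ b == c.
Proof. by case: b; case: c. Qed.

Definition Inv x c (a : vec) := (forall z, 0 <= a z) /\
  (forall z, odd (dist x z) == c -> forall w, w \in nbrs z -> a z + a w <= nb a z).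

Lemma inv_step x c a : Inv x c a -> Inv x (~~ c) (SigmaPar x c a).
Proof.
case=> [pos cond].
have K : forall z w, odd (dist x z) == c -> w \in nbrs z -> a w <= SigmaPar x c a z.
  move=> z w hz hw; rewrite /SigmaPar hz; have := cond z hz w hw.
  rewrite /nb => H; lia.
have pos' : forall z, 0 <= SigmaPar x c a z.
  move=> z; case hz: (odd (dist x z) == c).
    have [w hw _] := other3 z z (uniq_nbrs z) (size_nbrs z).
    exact: le_trans (pos w) (K z w hz hw).
  by rewrite /SigmaPar hz.
split=> // z hz w hw.
have hz' : (odd (dist x z) == c) = false by exact: bN1.
have hwc : odd (dist x w) == c by rewrite (odd_dist_adj x hw); exact: bN2.
have [o ho /andP[how _]] := other3 w w (uniq_nbrs z) (size_nbrs z).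
have hzo : z \in nbrs o by rewrite adj_sym.
have hoc : odd (dist x o) == c by rewrite (odd_dist_adj x ho); exact: bN2.
have h2 := two_le (uniq_nbrs z) hw ho how pos'.
have h1 := K o z hoc hzo.
rewrite {1}/SigmaPar hz' /nb.
rewrite /SigmaPar in h1 h2 *.
lia.
Qed.

Lemma fibnS k : fibn k.+2 = (fibn k.+1 + fibn k)%N.
Proof. by []. Qed.
Lemma fib_nat (n : nat) : fib (Posz n) = (fibn n)%:Z.
Proof. by []. Qed.
Lemma fib3 k : (fibn (k + 4) + fibn k = 3 * fibn (k + 2))%N.
Proof. rewrite !addnS !addn0 !fibnS; lia. Qed.

Lemma sM_S t : fib (2 * (t.+1)%:Z) = fib (2 * t%:Z + 2).
Proof. congr fib; lia. Qed.
Lemma sP_S t : fib (2 * (t.+1)%:Z + 2) = fib (2 * t%:Z + 2) *+ 3 - fib (2 * t%:Z).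
Proof.
have -> : 2 * (t.+1)%:Z + 2 = Posz (2 * t + 4) by lia.
have -> : 2 * t%:Z + 2 = Posz (2 * t + 2) by lia.
have -> : 2 * t%:Z = Posz (2 * t) by lia.
rewrite !fib_nat mul3; have := fib3 (2 * t); lia.
Qed.
Lemma rM_S t : fib (2 * (t.+1)%:Z - 1) = fib (2 * t%:Z + 1).
Proof. congr fib; lia. Qed.
Lemma rP_S t : fib (2 * (t.+1)%:Z + 1) = fib (2 * t%:Z + 1) *+ 3 - fib (2 * t%:Z - 1).
Proof.
case: t => [|t]; first by [].
have -> : 2 * (t.+2)%:Z + 1 = Posz (2 * t + 1 + 4) by lia.
have -> : 2 * (t.+1)%:Z + 1 = Posz (2 * t + 1 + 2) by lia.
have -> : 2 * (t.+1)%:Z - 1 = Posz (2 * t + 1) by lia.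
rewrite !fib_nat mul3; have := fib3 (2 * t + 1); lia.
Qed.

Lemma sbase_ge0 x z : 0 <= sbase x z.
Proof. by rewrite /sbase; case: (z == x). Qed.
Lemma sbase_neq x z : z != x -> sbase x z = 0.
Proof. by rewrite /sbase => /negbTE ->. Qed.
Lemma sbase_eq x : sbase x x = 1.
Proof. by rewrite /sbase eqxx. Qed.

Lemma sum_sbase x S (P : pred T) : x \in S -> uniq S ->
  \sum_(z <- S | P z) sbase x z = (P x : nat)%:Z.
Proof.
move=> hx uS; rewrite big_mkcond (bigD1_seq x) //= big1 ?addr0.
  by rewrite sbase_eq; case: (P x).
by move=> z hz; rewrite sbase_neq //; case: ifP.
Qed.

Lemma svecS x t : svec x t.+1 = SigmaPar x (~~ odd t) (svec x t).
Proof. by rewrite /=; case: (odd t). Qed.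
Lemma rvecS x y t : rvec x y t.+1 = SigmaPar x (~~ odd t) (rvec x y t).
Proof. by rewrite /=; case: (odd t). Qed.

Lemma inv_s x t : Inv x (~~ odd t) (svec x t).
Proof.
elim: t => [|t IH].
  split; first exact: sbase_ge0.
  move=> z hz w hw /=; have zx : z != x by apply/eqP => e; move: hz; rewrite e odd_dist0.
  rewrite sbase_neq // add0r /nb; exact: one_le (uniq_nbrs z) hw (sbase_ge0 x).
by rewrite svecS [odd t.+1]/=; apply: inv_step.
Qed.

Lemma inv_r1 x y : y \in nbrs x -> Inv x false (rvec x y 1).
Proof.
move=> hxy.
have hyo : odd (dist x y) = true by rewrite (odd_dist_adj x hxy) odd_dist0.
have xny : x != y by apply/eqP => e; move: hyo; rewrite -e odd_dist0.
have hyx : x \in nbrs y by rewrite adj_sym.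
set r0 := rvec x y 0.
have r0E : forall z, r0 z = sbase x z + sbase y z by [].
have r0pos : forall z, 0 <= r0 z by move=> z; rewrite r0E addr_ge0 // sbase_ge0.
have r0x : r0 x = 1 by rewrite r0E sbase_eq sbase_neq // addr0.
have r0y : r0 y = 1 by rewrite r0E sbase_eq sbase_neq 1?eq_sym // add0r.
have r0o : forall z, z != x -> z != y -> r0 z = 0.
  by move=> z h1 h2; rewrite r0E !sbase_neq // addr0.
have nbx : forall z, x \in nbrs z -> 1 <= nb r0 z.
  by move=> z hz; rewrite -r0x; exact: one_le (uniq_nbrs z) hz r0pos.
have r1E : rvec x y 1 = SigmaPar x true r0 by [].
rewrite r1E.
have pos : forall z, 0 <= SigmaPar x true r0 z.
  move=> z; rewrite /SigmaPar; case: ifP => hz; last exact: r0pos.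
  case: (eqVneq z y) => [->|zy].
    rewrite r0y; have := nbx y hyx; rewrite /nb; lia.
  have zx : z != x by apply/eqP => e; move: hz; rewrite e odd_dist0.
  rewrite r0o // oppr0 add0r /nb; apply: sumr_ge0 => w _; exact: r0pos.
split=> // z hz w hw.
have hz' : (odd (dist x z) == true) = false by move: hz; case: (odd _).
rewrite {1}/SigmaPar hz'.
case: (eqVneq z x) => [ezx|zx]; last first.
  have zy : z != y by apply/eqP => e; move: hz; rewrite e hyo.
  rewrite r0o // add0r /nb; exact: one_le (uniq_nbrs z) hw pos.
subst z; rewrite r0x.
have [o ho /andP[how hoy]] := other3 w y (uniq_nbrs x) (size_nbrs x).
have h2 := two_le (uniq_nbrs x) hw ho how pos.
have hoo : odd (dist x o) = true by rewrite (odd_dist_adj x ho) odd_dist0.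
have ox : o != x by apply/eqP => e; move: hoo; rewrite e odd_dist0.
have hxo : x \in nbrs o by rewrite adj_sym.
have h1 : 1 <= SigmaPar x true r0 o.
  rewrite /SigmaPar hoo eqxx r0o // oppr0 add0r; exact: nbx.
rewrite /nb; lia.
Qed.

Lemma inv_r x y t : y \in nbrs x -> Inv x (~~ odd t.+1) (rvec x y t.+1).
Proof.
move=> hxy; elim: t => [|t IH]; first exact: inv_r1.
by rewrite rvecS [odd t.+2]/=; apply: inv_step.
Qed.

Theorem proposition2p1 (x y : T) (t : nat) : adj x y ->
  (forall z, 0 <= svec x t z) /\ (forall z, 0 <= rvec x y t z) /\
  (exists S, covers (svec x t) S) /\ (exists S, covers (rvec x y t) S) /\
  (forall S, covers (svec x t) S ->
     sum_minus x t (svec x t) S = fib (2 * t%:Z) /\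
     sum_plus x t (svec x t) S = fib (2 * t%:Z + 2)) /\
  (forall S, covers (rvec x y t) S ->
     sum_minus x t (rvec x y t) S = fib (2 * t%:Z - 1) /\
     sum_plus x t (rvec x y t) S = fib (2 * t%:Z + 1)).
Proof.
rewrite /adj => hxy.
set n0 := (size (val x)).+1.
have hx : forall n, (n0 <= n)%N -> x \in ball n.
  by move=> n hn; apply: mem_ball; apply: leq_trans hn; exact: leqnSn.
have hy : forall n, (n0 <= n)%N -> y \in ball n.
  by move=> n hn; apply: mem_ball; apply: leq_trans hn; exact: adj_le hxy.
have s0 : supp (svec x 0) n0.
  move=> z /=; case: (eqVneq z x) => [->|zx]; first by rewrite leqnSn.
  by rewrite sbase_neq // eqxx.
have r0s : supp (rvec x y 0) n0.
  move=> z /=; case: (eqVneq z x) => [->|zx]; first by rewrite leqnSn.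
  case: (eqVneq z y) => [->|zy]; first by rewrite (adj_le hxy).
  by rewrite !sbase_neq // addr0 eqxx.
have Hs := seq_sums (svecS x) s0.
have Hr := seq_sums (rvecS x y) r0s.
have Vs : forall t, sum_minus x t (svec x t) (ball (n0 + t)) = fib (2 * t%:Z) /\
    sum_plus x t (svec x t) (ball (n0 + t)) = fib (2 * t%:Z + 2).
  elim=> [|k [IH1 IH2]].
    rewrite /sum_minus /sum_plus /= !sum_sbase ?hx ?uniq_ball ?addn0 //.
    by rewrite odd_dist0.
  have [_ [e1 e2]] := Hs k.
  by rewrite e1 e2 IH1 IH2 sM_S sP_S.
have Vr : forall t, sum_minus x t (rvec x y t) (ball (n0 + t)) = fib (2 * t%:Z - 1) /\
    sum_plus x t (rvec x y t) (ball (n0 + t)) = fib (2 * t%:Z + 1).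
  elim=> [|k [IH1 IH2]].
    have hyo : odd (dist x y) = true by rewrite (odd_dist_adj x hxy) odd_dist0.
    rewrite /sum_minus /sum_plus /= !big_split /= !sum_sbase ?hx ?hy ?uniq_ball ?addn0 //.
    by rewrite odd_dist0 hyo.
  have [_ [e1 e2]] := Hr k.
  by rewrite e1 e2 IH1 IH2 rM_S rP_S.
have Cs : covers (svec x t) (ball (n0 + t)) by apply: (cover_ball (Hs t).1).
have Cr : covers (rvec x y t) (ball (n0 + t)) by apply: (cover_ball (Hr t).1).
split; first exact: (inv_s x t).1.
split.
  case: t {Cs Cr} => [|t] z; first by rewrite /= addr_ge0 // sbase_ge0.
  exact: (inv_r t hxy).1.
split; first by exists (ball (n0 + t)).
split; first by exists (ball (n0 + t)).
split.
  move=> S hS; rewrite /sum_minus /sum_plus !(cover_indep _ hS Cs); exact: Vs.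
move=> S hS; rewrite /sum_minus /sum_plus !(cover_indep _ hS Cr); exact: Vr.
Qed.
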